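(* Let $n\ge1$, let $r$ be an integer with $(n+1)/2<r\le n$, and let $\alpha\in(0,1/2)$. Let $\theta\in\mathbb{R}^n$ and let $T_1,\dots,T_n$ be independent with $T_i\sim N(\theta_i,1)$; let $T_{(1)}\le\dots\le T_{(n)}$ be their order statistics. Let $\Phi$ be the standard normal cumulative distribution function and $t=\Phi^{-1}\{1-\alpha/(n-r+1)\}$. Let $n^+(\theta)=|\{i:\theta_i>0\}|$ and $n^-(\theta)=|\{i:\theta_i<0\}|$. Then $$\sup_{\theta\in\mathbb{R}^n:\ n^+(\theta)\ge r}\Pr_\theta\big(T_{(r)}<-t\big)\le\alpha\qquad\text{and}\qquad \sup_{\theta\in\mathbb{R}^n:\ n^-(\theta)\ge r}\Pr_\theta\big(T_{(n-r+1)}>t\big)\le\alpha.$$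
   Context: This is Type III (wrong sign) error control for the directional replicability test that rejects ''$n^+<r$ and $n^-<r$'' when $\min\{(n-r+1)p_{(r)},(n-r+1)q_{(r)}\}\le\alpha$, where $p_i=1-\Phi(T_i)$, $q_i=\Phi(T_i)$; the event $T_{(r)}\le -t$ is equivalent to $(n-r+1)q_{(r)}\le\alpha$ (declaring a negative replicated effect) and $T_{(n-r+1)}\ge t$ is equivalent to $(n-r+1)p_{(r)}\le\alpha$ (declaring a positive replicated effect). *)

(* Defs.v *)
From HB Require Import structures.
From mathcomp Require Import all_boot all_order all_algebra.
From mathcomp Require Import all_classical all_reals all_analysis.
Set Implicit Arguments. Unset Strict Implicit. Unset Printing Implicit Defensive.
Import Order.TTheory GRing.Theory Num.Theory.
Local Open Scope classical_set_scope.
Local Open Scope ring_scope.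

Definition mutually_independent {R : realType} {d : measure_display}
  {Omega : measurableType d} (P : probability Omega R) (n : nat)
  (X : 'I_n -> {RV P >-> R}) : Prop :=
  forall (J : {set 'I_n}) (B : 'I_n -> set R),
    (forall i, measurable (B i)) ->
    P (\bigcap_(i in [set` J]) (X i @^-1` B i)) =
    (\prod_(i in J) P (X i @^-1` B i))%E.

Definition orderstat {R : realType} (n : nat) (x : 'I_n -> R) (k : nat) : R :=
  nth 0 (sort <=%R [seq x i | i <- enum 'I_n]) k.-1.

Definition Phi {R : realType} (x : R) : \bar R := normal_prob 0 1 `]-oo, x].

Definition npos {R : realType} (n : nat) (theta : 'I_n -> R) : nat :=
  #|[set i | 0 < theta i]|.
Definition nneg {R : realType} (n : nat) (theta : 'I_n -> R) : nat :=
  #|[set i | theta i < 0]|.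

(* Main.v *)
Require Import Defs.
From HB Require Import structures.
From mathcomp Require Import all_boot all_order all_algebra.
From mathcomp Require Import all_classical all_reals all_analysis.
From mathcomp Require Import zify lra measurable_realfun.
Import Order.TTheory GRing.Theory Num.Theory.
Import numFieldTopology.Exports.
Local Open Scope classical_set_scope.
Local Open Scope ring_scope.
Set Implicit Arguments. Unset Strict Implicit. Unset Printing Implicit Defensive.
Section lists.
Variable R : realType.

Lemma sorted_ge_head (x : R) s y : sorted <=%R (x :: s) -> y \in s -> x <= y.
Proof.
move=> /= Hs ys.
have := order_path_min (@le_trans _ R) Hs.
by move/allP => /(_ y ys).
Qed.

Lemma sorted_nth_lt (s : seq R) (c : R) k : sorted <=%R s -> (k < size s)%N ->
  (nth 0 s k < c) = (k < count (fun y => (y < c)%R) s)%N.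
Proof.
elim: s k => [//|x s IH] [|k] Hs Hk.
- rewrite /=; case xc: (x < c); first by rewrite add1n.
  rewrite add0n; apply/esym/negbTE; rewrite -has_count.
  apply/hasPn => y ys; have := sorted_ge_head Hs ys.
  by move: xc => /negbT; rewrite -leNgt => cx xy; rewrite -leNgt (le_trans cx xy).
- have Hs' : sorted <=%R s by move: Hs => /= /path_sorted.
  rewrite /= IH //; case xc: (x < c); first by rewrite add1n.
  have hx : c <= x by rewrite leNgt xc.
  have -> : count (fun y => (y < c)%R) s = 0%N.
    apply/eqP; rewrite -leqn0 leqNgt -has_count; apply/hasPn => y ys.
    by rewrite -leNgt (le_trans hx (sorted_ge_head Hs ys)).
  by [].
Qed.

Lemma sorted_nth_gt (s : seq R) (c : R) k : sorted <=%R s -> (k < size s)%N ->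
  (c < nth 0 s k) = (size s - k <= count (fun y => (c < y)%R) s)%N.
Proof.
elim: s k => [//|x s IH] [|k] Hs Hk.
- rewrite /= subn0; case xc: (c < x).
  + have -> : count (fun y => (c < y)%R) s = size s.
      apply/eqP; rewrite -all_count; apply/allP => y ys.
      by rewrite (lt_le_trans xc (sorted_ge_head Hs ys)).
    by rewrite /= add1n leqnn.
  + by apply/esym/negbTE; rewrite -ltnNge add0n ltnS count_size.
- have Hs' : sorted <=%R s by move: Hs => /= /path_sorted.
  rewrite /= subSS IH //; case xc: (c < x).
  + have -> : count (fun y => (c < y)%R) s = size s.
      apply/eqP; rewrite -all_count; apply/allP => y ys.
      by rewrite (lt_le_trans xc (sorted_ge_head Hs ys)).
    by rewrite leq_subr; apply/esym; rewrite add1n leqW // leq_subr.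
  + by rewrite add0n.
Qed.

Lemma card_count n (p : pred 'I_n) : #|[pred i | p i]| = count p (enum 'I_n).
Proof. rewrite cardE /enum_mem size_filter (@eq_filter _ _ predT) // filter_predT.
exact: eq_count. Qed.

Lemma orderstat_lt n (x : 'I_n -> R) k c : (0 < k <= n)%N ->
  (orderstat x k < c) = (k <= #|[pred i | (x i < c)%R]|)%N.
Proof.
move=> /andP[k0 kn]; rewrite /orderstat sorted_nth_lt ?sort_sorted //; last first.
  by rewrite size_sort size_map size_enum_ord; lia.
  exact: le_total.
rewrite (permP (permEl (perm_sort _ _))) count_map card_count.
by case: k k0 kn.
Qed.

Lemma orderstat_gt n (x : 'I_n -> R) k c : (0 < k <= n)%N ->
  (c < orderstat x k) = (n - k.-1 <= #|[pred i | (c < x i)%R]|)%N.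
Proof.
move=> /andP[k0 kn]; rewrite /orderstat sorted_nth_gt ?sort_sorted //; last first.
  by rewrite size_sort size_map size_enum_ord; lia.
  exact: le_total.
by rewrite (permP (permEl (perm_sort _ _))) count_map card_count size_sort size_map size_enum_ord.
Qed.

End lists.
Section meas.
Context (R : realType) (d : measure_display) (Omega : measurableType d) (P : probability Omega R).

Lemma card_level_measurable n (f : 'I_n -> Omega -> bool) m :
  (forall i, measurable [set w | f i w]) ->
  measurable [set w | (m <= #|[pred i | f i w]|)%N].
Proof.
move=> mf.
have -> : [set w | (m <= #|[pred i | f i w]|)%N] =
  \bigcup_(A in [set A : {set 'I_n} | (m <= #|A|)%N])
     \bigcap_(i in [set i | i \in A]) [set w | f i w].
  apply/seteqP; split => w /=.
  - move=> h; exists (finset (fun i => f i w)) => /=.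
      by rewrite cardsE.
    by move=> i /=; rewrite inE.
  - move=> [A /= hA hw]; apply: leq_trans hA _; apply: subset_leq_card.
    by apply/fintype.subsetP => i iA; rewrite inE /=; exact: hw.
apply: fin_bigcup_measurable; first exact: finite_finset.
move=> A _; apply: fin_bigcap_measurable; first exact: finite_finset.
by move=> i _; exact: mf.
Qed.

Lemma key_bound n (f : 'I_n -> Omega -> bool) (E : set Omega) (Pos : pred 'I_n)
    k (b : R) :
  measurable E -> (forall i, measurable [set w | f i w]) -> (k <= #|Pos|)%N ->
  (forall i, Pos i -> (P [set w | f i w] <= b%:E)%E) ->
  (forall w, E w -> (n - k < #|[pred i | f i w]|)%N) ->
  (P E <= (k%:R * b)%:E)%E.
Proof.
move=> mE mf kP hb hE.
case: (posnP k) => [k0|kpos].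
  have -> : E = set0.
    apply/seteqP; split => w //= /hE; rewrite k0 subn0 => h.
    by move: (leq_trans h (max_card _)); rewrite card_ord ltnn.
  by rewrite measure0 k0 mul0r.
have [i0 _] : exists i0, i0 \in Pos.
  by apply/card_gt0P; exact: leq_trans kpos kP.
pose s := enum Pos.
have ss : size s = #|Pos| by rewrite cardE.
pose F j := [set w | f (nth i0 s j) w].
have H1 : (P E <= \sum_(j < k) P (F j))%E.
  apply: content_subadditive => //.
    by move=> j _; exact: mf.
  rewrite -bigcup_mkord => w Ew.
  case/boolP: [exists j : 'I_k, f (nth i0 s j) w] => [/existsP[j hj]|hn].
    by exists j => //=; exact: ltn_ord.
  exfalso; have := hE w Ew.
  have hsub : [pred i | f i w] \subset [predC [pred i | i \in take k s]].
    apply/fintype.subsetP => i /= fi; rewrite inE /=; apply/negP => it.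
    move/negP: hn; apply; apply/existsP.
    have ik : (index i (take k s) < k)%N.
      have h : (index i (take k s) < size (take k s))%N by rewrite index_mem.
      by apply: leq_trans h _; rewrite size_take; case: ltnP => h' //; exact: ltnW.
    exists (Ordinal ik) => /=.
    by rewrite -(nth_take _ ik) nth_index.
  have := subset_leq_card hsub.
  have hc := cardC [pred i | i \in take k s].
  have hu : #|[pred i | i \in take k s]| = k.
    by rewrite (card_uniqP _) ?take_uniq ?enum_uniq // size_take ss; case: ltnP => // h; apply/eqP; rewrite eqn_leq h kP.
  rewrite card_ord hu in hc; move: hc; set a := #|[predC _]|; set c := #|[pred i | f i w]|; lia.
apply: (le_trans H1).
have -> : (k%:R * b)%:E = (\sum_(j < k) b%:E)%E.
  by rewrite sumEFin sumr_const card_ord mulr_natl.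
apply: lee_sum => j _; apply: hb.
have : nth i0 s j \in s by apply: mem_nth; rewrite ss; exact: leq_trans (ltn_ord j) kP.
by rewrite mem_enum.
Qed.

End meas.
Section normal.
Context (R : realType).
Local Open Scope ereal_scope.

Lemma normal_reflect (m a : R) :
  normal_prob m 1 `]-oo, (- a)%R] = normal_prob (- m)%R 1 `[a, +oo[.
Proof.
rewrite /normal_prob ge0_integration_by_substitutionNy.
- apply: eq_integral => x _; congr EFin.
  rewrite /= /normal_pdf oner_eq0 /normal_fun.
  by rewrite -opprD sqrrN opprK.
  by apply: continuous_in_subspaceT => x _; exact: (@continuous_normal_pdf R m 1 (oner_neq0 R) x).
- by move=> x _; exact: normal_pdf_ge0.
Qed.

Lemma normal_cmp (m a : R) :
  (forall x, a <= x -> x ^+ 2 <= (x - m) ^+ 2)%R ->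
  normal_prob m 1 `[a, +oo[ <= normal_prob 0 1 `[a, +oo[.
Proof.
move=> h; rewrite /normal_prob; apply: ge0_le_integral => //.
- by move=> x _; rewrite lee_fin normal_pdf_ge0.
- by have := measurable_normal_pdf m (1:R) => /measurable_EFinP /(measurable_funTS (D := `[a, +oo[)).
- by have := measurable_normal_pdf 0 (1:R) => /measurable_EFinP /(measurable_funTS (D := `[a, +oo[)).
- move=> x /=; rewrite in_itv /= andbT => ax; rewrite lee_fin.
  rewrite /normal_pdf oner_eq0 /=; apply: ler_wpM2l; first exact: normal_peak_ge0.
  rewrite /normal_fun ler_expR subr0 !mulNr lerN2; apply: ler_wpM2r.
    by rewrite expr1n invr_ge0.
  exact: h.
Qed.

Lemma Phi_compl (a : R) : Phi a + normal_prob 0 1 `[a, +oo[ = 1.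
Proof.
have -> : normal_prob 0 1 `[a, +oo[ = normal_prob 0 1 `]a, +oo[.
  rewrite /normal_prob -integral_itv_obnd_cbnd //.
  by apply: measurable_funTS; apply/measurable_EFinP; exact: measurable_normal_pdf.
rewrite /Phi -measureU //=.
- rewrite (_ : _ `|` _ = setT) ?probability_setT //.
  apply/seteqP; split => x //= _; rewrite !in_itv /= andbT.
  by case: (leP x a); [left|right].
- apply/seteqP; split => x //= []; rewrite !in_itv /= andbT => h1 h2.
  by move: (le_lt_trans h1 h2); rewrite ltxx.
Qed.

End normal.

Lemma npos_pred (R : realType) n (th : 'I_n -> R) : npos th = #|[pred i | 0 < th i]|.
Proof. apply: eq_card => i. rewrite /= inE /=. apply/idP/idP; rewrite in_setE //. Qed.

Lemma nneg_pred (R : realType) n (th : 'I_n -> R) : nneg th = #|[pred i | th i < 0]|.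
Proof. apply: eq_card => i. rewrite /= inE /=. apply/idP/idP; rewrite in_setE //. Qed.

Theorem proposition2 (R : realType) (d : measure_display)
  (Omega : measurableType d) (P : probability Omega R)
  (n r : nat) (alpha t : R) :
  (1 <= n)%N ->
  (n + 1)%:R / 2 < r%:R :> R -> (r <= n)%N ->
  0 < alpha < 1 / 2 ->
  Phi t = (1 - alpha / (n - r + 1)%:R)%:E ->
  (forall (theta : 'I_n -> R) (T : 'I_n -> {RV P >-> R}),
     mutually_independent T ->
     (forall i A, measurable A -> distribution P (T i) A = normal_prob (theta i) 1 A) ->
     (r <= npos theta)%N ->
     (P [set w | (orderstat (fun i => T i w) r < - t)%R] <= alpha%:E)%E) /\
  (forall (theta : 'I_n -> R) (T : 'I_n -> {RV P >-> R}),
     mutually_independent T ->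
     (forall i A, measurable A -> distribution P (T i) A = normal_prob (theta i) 1 A) ->
     (r <= nneg theta)%N ->
     (P [set w | (orderstat (fun i => T i w) (n - r + 1) > t)%R] <= alpha%:E)%E).
Proof.
move=> n1 hr rn /andP[a0 a12] hPhi.
have h2r : (n + 1 < r * 2)%N.
  by move: hr; rewrite ltr_pdivrMr // -natrM ltr_nat.
set k := (n - r + 1)%N.
have kr : (k <= r)%N by rewrite /k; lia.
have k0 : (0 < k)%N by rewrite /k; lia.
have r0 : (0 < r)%N by lia.
set b := alpha / k%:R.
have kR : (0 < k%:R :> R) by rewrite ltr0n.
have hkb : k%:R * b = alpha by rewrite /b mulrC divfK // gt_eqF.
have hb : b <= alpha.
  have k1 : 1 <= k%:R :> R by rewrite ler1n.
  have b0 : 0 <= b by rewrite /b divr_ge0 ?ltW.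
  nra.
have hQ : normal_prob 0 1 `[t, +oo[ = b%:E.
  move: (Phi_compl t); rewrite hPhi.
  case: (normal_prob 0 1 `[t, +oo[) => [q||] //= h.
  rewrite -EFinD in h; case: h => hq; congr EFin; rewrite -/k -/b in hq; lra.
have t0 : 0 <= t.
  rewrite leNgt; apply/negP => tneg.
  have h1 : Phi t = normal_prob 0 1 `[(- t)%R, +oo[.
    by rewrite /Phi -{1}(opprK t) normal_reflect oppr0.
  have h2 : (Phi t <= Phi (- t))%E.
    rewrite /Phi; apply: le_measure; rewrite ?inE //.
    move=> x /=; rewrite !in_itv /= => xt; apply: (le_trans xt); lra.
  have := Phi_compl (- t); rewrite -h1 => h3.
  have h4 : (Phi t + Phi t <= 1)%E by rewrite -h3 leeD2r.
  move: h4; rewrite hPhi -EFinD lee_fin => h4.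
  rewrite -/k -/b in h4; lra.
split.
- move=> theta T _ hdist hpos.
  have -> : [set w | (orderstat (fun i => T i w) r < - t)%R] =
            [set w | (r <= #|[pred i | (T i w < - t)%R]|)%N].
    by apply/seteqP; split => w /=; rewrite orderstat_lt // r0 rn.
  rewrite -hkb.
  have mf : forall i, measurable [set w | (T i w < - t)%R].
    move=> i; rewrite (_ : [set w | _] = T i @^-1` `]-oo, (- t)%R[); last first.
      by apply/seteqP; split => w /=; rewrite in_itv.
    exact: measurable_funPTI.
  apply: (key_bound (Pos := [pred i | 0 < theta i])).
  + exact: card_level_measurable.
  + exact: mf.
  + by rewrite -npos_pred; exact: leq_trans kr hpos.
  + move=> i /= thi.
    apply: (@le_trans _ _ (P (T i @^-1` `]-oo, (- t)%R]))).
      apply: le_measure; rewrite ?inE //; first exact: measurable_funPTI.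
      by move=> w /=; rewrite in_itv /= => /ltW.
    rewrite -[P _]/(distribution P (T i) _) hdist // normal_reflect -hQ.
    apply: normal_cmp => x tx; nra.
  + by move=> w /=; rewrite /k; lia.
- move=> theta T _ hdist hneg.
  have -> : [set w | (t < orderstat (fun i => T i w) (n - r + 1))%R] =
            [set w | (r <= #|[pred i | (t < T i w)%R]|)%N].
    apply/seteqP; split => w /=; rewrite orderstat_gt; try lia;
      by rewrite (_ : (n - (n - r + 1).-1 = r)%N) //; lia.
  rewrite -hkb.
  have mf : forall i, measurable [set w | (t < T i w)%R].
    move=> i; rewrite (_ : [set w | _] = T i @^-1` `]t, +oo[); last first.
      by apply/seteqP; split => w /=; rewrite in_itv /= andbT.
    exact: measurable_funPTI.
  apply: (key_bound (Pos := [pred i | theta i < 0])).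
  + exact: card_level_measurable.
  + exact: mf.
  + by rewrite -nneg_pred; exact: leq_trans kr hneg.
  + move=> i /= thi.
    apply: (@le_trans _ _ (P (T i @^-1` `[t, +oo[))).
      apply: le_measure; rewrite ?inE //; first exact: measurable_funPTI.
      by move=> w /=; rewrite !in_itv /= !andbT => /ltW.
    rewrite -[P _]/(distribution P (T i) _) hdist // -hQ.
    apply: normal_cmp => x tx; nra.
  + by move=> w /=; rewrite /k; lia.
Qed.
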